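(* Let $Q_+$ be an affine semigroup with $Q=\mathbb{Z}Q_+\cong\mathbb{Z}^d$, and let $\{M^1_n\}_{n\in\mathbb{Z}^k},\dots,\{M^r_n\}_{n\in\mathbb{Z}^k}$ be constructible families of $Q$-modules. Then the functions $n\mapsto\max\{i\mid M^i_n\neq0\}$ and $n\mapsto\min\{i\mid M^i_n\neq0\}$ (defined for those $n$ where some $M^i_n\neq0$) are piecewise quasiconstant, i.e., piecewise quasipolynomial of degree $0$.
   Context: $\Bbbk$ is a field; an affine semigroup is a finitely generated submonoid with trivial units of a free abelian group, and $Q$ is ordered by $q\preceq q'$ iff $q'-q\in Q_+$. Semisimple subset: finite disjoint union of sets $q+N$ with $N$ generated by linearly independent elements. A Presburger group is a partially ordered free abelian group of finite rank whose positive cone is semisimple and generates a finite-index subgroup. A module over a Presburger group $G$ (a $G$-graded $\Bbbk[G_+]$-module) is constructible if its graded pieces are finite-dimensional and $G$ can be partitioned into finitely many semisimple regions $I$ with vector spaces $M_I$ and isomorphisms $M_I\to M_g$ ($g\in I$) such that for $g\in I$, $h\in J$, $g\preceq h$, the composite $M_I\to M_g\to M_h\to M_J$ depends only on $I,J$. A family $\{M_n\}_{n\in\mathbb{Z}^k}$ of $Q$-modules is constructible if for some Presburger group $G=\mathbb{Z}^k\times Q$ whose positive cone $G_+$ satisfies $G_+\cap(\{0\}\times Q)=\{0\}\times Q_+$ (a Rees monoid), the direct sum $\bigoplus_nM_n(-n)$ with $M_n$ in slice $\{n\}\times Q$ is a $G$-graded $\Bbbk[G_+]$-module extending the slice structures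 and is constructible. Piecewise quasipolynomial: on each of finitely many rational convex polyhedra covering $\mathbb{Z}^k$, the function agrees with a function that is polynomial on each coset of some finite-index sublattice. *)

(* Defs.v *)
From HB Require Import structures.
From mathcomp Require Import all_boot all_order all_algebra.
Set Implicit Arguments. Unset Strict Implicit. Unset Printing Implicit Defensive.
Import Order.TTheory GRing.Theory Num.Theory.
Local Open Scope ring_scope.

Definition gen_monoid (V : zmodType) (r : nat) (v : 'I_r -> V) (x : V) : Prop :=
  exists c : 'I_r -> nat, x = \sum_(i < r) (v i *+ c i).

Definition lin_indep (V : zmodType) (r : nat) (v : 'I_r -> V) : Prop :=
  forall c : 'I_r -> int, \sum_(i < r) (v i *~ c i) = 0 -> forall i, c i = 0.

Definition semisimple (V : zmodType) (S : V -> Prop) : Prop :=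
  exists (s : nat) (q : 'I_s -> V) (r : 'I_s -> nat) (v : forall j, 'I_(r j) -> V),
    [/\ forall j, lin_indep (v j),
        forall x, S x <-> exists j, exists y, gen_monoid (v j) y /\ x = q j + y
      & forall j j' x y y', j != j' -> gen_monoid (v j) y -> gen_monoid (v j') y' ->
          x = q j + y -> x <> q j' + y'].

Definition finite_index (V : zmodType) (H : V -> Prop) : Prop :=
  exists (s : nat) (c : 'I_s -> V), forall x, exists j, H (x - c j).

Definition is_subgroup (V : zmodType) (H : V -> Prop) : Prop :=
  H 0 /\ forall x y, H x -> H y -> H (x - y).

Definition monoid_group (V : zmodType) (P : V -> Prop) (x : V) : Prop :=
  exists a b, [/\ P a, P b & x = a - b].

(* P is the positive cone of a Presburger group structure on V (V free abelian
   of finite rank): P is a pointed submonoid (so q <= q' iff P (q' - q) is a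
   partial order), semisimple, generating a finite-index subgroup. *)
Definition presburger_cone (V : zmodType) (P : V -> Prop) : Prop :=
  [/\ P 0, (forall x y, P x -> P y -> P (x + y)),
      (forall x, P x -> P (- x) -> x = 0),
      semisimple P
    & finite_index (monoid_group P)].

(* A V-graded K[P]-module with finite-dimensional graded pieces: piece g is
   K^(dim g) (row vectors), and act g h : M_g -> M_h (right multiplication) is
   the action of the monomial for h - g in P. *)
Definition is_gmodule (K : fieldType) (V : zmodType) (P : V -> Prop)
  (dim : V -> nat) (act : forall g h : V, 'M[K]_(dim g, dim h)) : Prop :=
  (forall g, act g g = 1%:M) /\
  (forall g h l, P (h - g) -> P (l - h) -> act g h *m act h l = act g l).

Definition constructible (K : fieldType) (V : zmodType) (P : V -> Prop)
  (dim : V -> nat) (act : forall g h : V, 'M[K]_(dim g, dim h)) : Prop :=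
  is_gmodule P act /\
  exists (s : nat) (reg : V -> 'I_s) (e : 'I_s -> nat)
         (phi : forall g, 'M[K]_(e (reg g), dim g))
         (psi : forall g, 'M[K]_(dim g, e (reg g)))
         (T : forall i j, 'M[K]_(e i, e j)),
    [/\ forall j, semisimple (fun g => reg g = j),
        forall g, phi g *m psi g = 1%:M /\ psi g *m phi g = 1%:M
      & forall g h, P (h - g) -> phi g *m act g h *m psi h = T (reg g) (reg h)].

(* Constructible family {M_n}_{n in Z^k} of Q-modules, Q = Z^d with positive
   cone Qplus; M_n has pieces K^(dim n q) and structure maps act n q q'. *)
Definition constructible_family (K : fieldType) (k d : nat)
  (Qplus : 'rV[int]_d -> Prop) (dim : 'rV[int]_k -> 'rV[int]_d -> nat)
  (act : forall n q q', 'M[K]_(dim n q, dim n q')) : Prop :=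
  exists P : 'rV[int]_k * 'rV[int]_d -> Prop,
  [/\ presburger_cone P,
      (forall q, P (0, q) <-> Qplus q)
    & exists actG : forall g h : 'rV[int]_k * 'rV[int]_d,
                      'M[K]_(dim g.1 g.2, dim h.1 h.2),
        constructible P actG /\
        forall n q q', Qplus (q' - q) -> actG (n, q) (n, q') = act n q q'].

Definition in_polyhedron (k m : nat) (A : 'M[rat]_(m, k)) (b : 'cV[rat]_m)
  (n : 'rV[int]_k) : Prop :=
  forall i : 'I_m, \sum_(l < k) A i l * (n 0 l)%:~R <= b i 0.

(* The partial function described by the relation F (F n v : "the function takes
   value v at n"; F n is empty where the function is undefined) is piecewise
   quasiconstant: finitely many rational convex polyhedra cover Z^k, and on each
   the function agrees (where defined) with a function constant on each coset
   of some finite-index sublattice. *)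
Definition piecewise_quasiconstant (k : nat) (F : 'rV[int]_k -> nat -> Prop) : Prop :=
  exists (p : nat) (m : 'I_p -> nat) (A : forall j, 'M[rat]_(m j, k))
         (b : forall j, 'cV[rat]_(m j)) (L : 'I_p -> 'rV[int]_k -> Prop)
         (c : 'I_p -> 'rV[int]_k -> int),
    [/\ forall n, exists j, in_polyhedron (A j) (b j) n,
        forall j, is_subgroup (L j) /\ finite_index (L j),
        forall j n n', L j (n - n') -> c j n = c j n'
      & forall j n v, in_polyhedron (A j) (b j) n -> F n v -> c j n = v%:Z].

(* M^i_n <> 0, with modules indexed by i : 'I_r standing for i.+1 in 1..r *)
Definition max_nonzero (r : nat) (k : nat) (nz : 'I_r -> 'rV[int]_k -> Prop)
  (n : 'rV[int]_k) (v : nat) : Prop :=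
  (exists i : 'I_r, nz i n /\ v = i.+1) /\ (forall i : 'I_r, nz i n -> (i.+1 <= v)%N).

Definition min_nonzero (r : nat) (k : nat) (nz : 'I_r -> 'rV[int]_k -> Prop)
  (n : 'rV[int]_k) (v : nat) : Prop :=
  (exists i : 'I_r, nz i n /\ v = i.+1) /\ (forall i : 'I_r, nz i n -> (v <= i.+1)%N).

(* Main.v *)
Require Import Defs.
From HB Require Import structures.
From mathcomp Require Import all_boot all_order all_algebra.
From mathcomp Require Import zify ring.
From Stdlib Require Import ClassicalEpsilon FunctionalExtensionality PropExtensionality.
Import Order.TTheory GRing.Theory Num.Theory.
Local Open Scope ring_scope.

Module Helpers.
Set Implicit Arguments. Unset Strict Implicit. Unset Printing Implicit Defensive.


Section Good.
Variable k : nat.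
Notation vec := 'rV[int]_k.

Definition dot (a x : vec) : int := \sum_(l < k) a 0 l * x 0 l.

Lemma dotD a x y : dot a (x + y) = dot a x + dot a y.
Proof. by rewrite /dot -big_split; apply: eq_bigr => l _; rewrite mxE mulrDr. Qed.
Lemma dotN a x : dot a (- x) = - dot a x.
Proof. by rewrite /dot -sumrN; apply: eq_bigr => l _; rewrite mxE mulrN. Qed.
Lemma dotB a x y : dot a (x - y) = dot a x - dot a y.
Proof. by rewrite dotD dotN. Qed.
Lemma dotMn a x n : dot a (x *+ n) = dot a x * n%:Z.
Proof. rewrite /dot big_distrl; apply: eq_bigr => l _ /=; by rewrite mulmxnE -mulr_natr natz mulrA. Qed.
Lemma dotZl c a x : dot (c *: a) x = c * dot a x.
Proof. rewrite /dot big_distrr; apply: eq_bigr => l _; by rewrite mxE -mulrA. Qed.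
Lemma dotBl a a' x : dot (a - a') x = dot a x - dot a' x.
Proof. rewrite /dot -sumrB; apply: eq_bigr => l _; by rewrite !mxE mulrBl. Qed.
Lemma dotNl a x : dot (- a) x = - dot a x.
Proof. rewrite /dot -sumrN; apply: eq_bigr => l _; by rewrite !mxE mulNr. Qed.

Definition cong (m : nat) (x y : vec) := forall l, (m%:Z %| (x 0 l - y 0 l)%R)%Z.

Lemma cong_refl m x : cong m x x.
Proof. by move=> l; rewrite subrr rpred0. Qed.
Lemma cong_sym m x y : cong m x y -> cong m y x.
Proof. by move=> h l; rewrite -opprB rpredN. Qed.
Lemma cong_trans m x y z : cong m x y -> cong m y z -> cong m x z.
Proof. move=> h1 h2 l; have := rpredD (h1 l) (h2 l). by rewrite addrA subrK. Qed.
Lemma cong_mull m1 m2 x y : cong (m1 * m2) x y -> cong m1 x y.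
Proof. move=> h l; apply: dvdz_trans (h l); by rewrite PoszM dvdz_mulr. Qed.
Lemma cong_mulr m1 m2 x y : cong (m1 * m2) x y -> cong m2 x y.
Proof. move=> h l; apply: dvdz_trans (h l); by rewrite PoszM dvdz_mull. Qed.
Lemma cong_sub m x y z : cong m x y -> cong m (x - z) (y - z).
Proof. move=> h l; rewrite !mxE; have -> : x 0 l - z 0 l - (y 0 l - z 0 l) = x 0 l - y 0 l by ring. exact: h. Qed.
Lemma cong_shift m x w r s : cong m (x - w *+ (r + m * s)) (x - w *+ r).
Proof. move=> l; rewrite !mxE !mulmxnE mulrnDr.
have -> : x 0 l - (w 0 l *+ r + w 0 l *+ (m * s)) - (x 0 l - w 0 l *+ r) = - (w 0 l *+ (m*s)) by ring.
by rewrite rpredN -mulr_natr natrM mulrCA natz; apply: dvdz_mulr; exact: dvdzz. Qed.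

Lemma dot_cong m a x y : cong m x y -> (m%:Z %| dot a x - dot a y)%Z.
Proof. move=> h; rewrite /dot -sumrB; apply: rpred_sum => l _; rewrite -mulrBr; exact: dvdz_mull. Qed.

Definition sat (c : seq (vec * int)) (x : vec) : bool := all (fun p => dot p.1 x <= p.2) c.
Definition covers (cells : seq (seq (vec * int))) := forall x, has (fun c => sat c x) cells.
Definition percell (cells : seq (seq (vec * int))) (m : nat) (S : vec -> Prop) :=
  forall c, c \in cells -> forall x x', sat c x -> sat c x' -> cong m x x' -> (S x <-> S x').
Definition good (S : vec -> Prop) :=
  exists cells m, [/\ (0 < m)%N, covers cells & percell cells m S].

Definition prodc (c1 c2 : seq (seq (vec * int))) := [seq a ++ b | a <- c1, b <- c2].

Lemma covers_prod c1 c2 : covers c1 -> covers c2 -> covers (prodc c1 c2).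
Proof.
move=> h1 h2 x; have/hasP[a ha sa] := h1 x; have/hasP[b hb sb] := h2 x.
apply/hasP; exists (a ++ b); first by apply/allpairsP; exists (a, b).
by rewrite /sat all_cat; apply/andP.
Qed.

Lemma percell_prodl c1 c2 m1 m2 S : percell c1 m1 S -> percell (prodc c1 c2) (m1 * m2) S.
Proof.
move=> h c /allpairsP[[a b] /= [ha hb ->]] x x'; rewrite /sat !all_cat => /andP[s1 _] /andP[s1' _] hc.
exact: (h a ha x x' s1 s1' (cong_mull hc)).
Qed.

Lemma percell_prodr c1 c2 m1 m2 S : percell c2 m2 S -> percell (prodc c1 c2) (m1 * m2) S.
Proof.
move=> h c /allpairsP[[a b] /= [ha hb ->]] x x'; rewrite /sat !all_cat => /andP[_ s1] /andP[_ s1'] hc.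
exact: (h b hb x x' s1 s1' (cong_mulr hc)).
Qed.

Lemma good_ext S S' : good S -> (forall x, S x <-> S' x) -> good S'.
Proof.
move=> [cs [m [hm hc hp]]] e; exists cs, m; split => // c hcin x x' s s' hx.
move: (hp c hcin x x' s s' hx) (e x) (e x'); tauto.
Qed.

Lemma good_periodic m S : (0 < m)%N -> (forall x x', cong m x x' -> (S x <-> S x')) -> good S.
Proof.
move=> hm h; exists [:: [::]], m; split => //.
move=> c _ x x' _ _; exact: h.
Qed.

Lemma good_const (P : Prop) : good (fun _ => P).
Proof. by apply: (@good_periodic 1%N). Qed.

Lemma good_op (op : Prop -> Prop -> Prop) S1 S2 :
  good S1 -> good S2 -> good (fun x => op (S1 x) (S2 x)).
Proof.
move=> [c1 [m1 [hm1 hc1 hp1]]] [c2 [m2 [hm2 hc2 hp2]]].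
exists (prodc c1 c2), (m1 * m2)%N; split; first by rewrite muln_gt0 hm1.
  exact: covers_prod.
move=> c hc x x' s s' hx.
have e1 := percell_prodl (c2:=c2) (m2:=m2) hp1 hc s s' hx.
have e2 := percell_prodr (c1:=c1) (m1:=m1) hp2 hc s s' hx.
have -> : S1 x = S1 x' by apply: propositional_extensionality.
by have -> : S2 x = S2 x' by apply: propositional_extensionality.
Qed.

Lemma good_bigI (T : eqType) (l : seq T) (F : T -> vec -> Prop) :
  (forall a, a \in l -> good (F a)) -> good (fun x => forall a, a \in l -> F a x).
Proof.
elim: l => [|a l IH] h.
  by apply: good_ext (good_const True) _ => x; split => // _ a; rewrite in_nil.
have g1 := h a (mem_head _ _).
have g2 := IH (fun b hb => h b (mem_behead (s:=a::l) hb)).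
apply: good_ext (good_op and g1 g2) _ => x; split.
  move=> [h1 h2] b; rewrite in_cons => /orP[/eqP -> //|]; exact: h2.
move=> H; split; first exact: H (mem_head _ _).
move=> b hb; apply: H; by rewrite in_cons hb orbT.
Qed.

Lemma good_bigU (T : eqType) (l : seq T) (F : T -> vec -> Prop) :
  (forall a, a \in l -> good (F a)) -> good (fun x => exists a, a \in l /\ F a x).
Proof.
elim: l => [|a l IH] h.
  by apply: good_ext (good_const False) _ => x; split => // -[a []]; rewrite in_nil.
have g1 := h a (mem_head _ _).
have g2 := IH (fun b hb => h b (mem_behead (s:=a::l) hb)).
apply: good_ext (good_op or g1 g2) _ => x; split.
  move=> [h1|[b [hb h2]]]; first by exists a; rewrite mem_head.
  by exists b; rewrite in_cons hb orbT.
move=> [b []]; rewrite in_cons => /orP[/eqP -> | hb] hF; first by left.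
by right; exists b.
Qed.

Lemma good_half a b : good (fun x => dot a x <= b).
Proof.
exists [:: [:: (a, b)]; [:: (- a, - b - 1)]], 1%N; split => //.
  move=> x /=; rewrite /sat /= !andbT dotNl orbF; case: (lerP (dot a x) b) => /= h //; lia.

move=> c; rewrite !inE => /orP[]/eqP -> x x'; rewrite /sat /= !andbT ?dotNl => h1 h2 _.
  by rewrite h1 h2.
split => h; lia.
Qed.
Goal True. Abort.

Section Two.
Variables (al al' : int) (a a' : vec) (e e' : int).
Hypotheses (hal : 0 < al) (hal' : al' < 0).
Let P x := exists s : int, dot a x + e <= s * al /\ dot a' x + e' <= s * al'.
Let D x := al' * (dot a x + e) - al * (dot a' x + e').
Let M := - (al * al').

Lemma two_neg x : D x <= -1 -> ~ P x.
Proof. rewrite /D => hD [s [h1 h2]]; nia. Qed.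

Lemma two_big x : M - 1 <= D x -> P x.
Proof.
rewrite /D /M => hD.
exists ((dot a x + e + al - 1) %/ al)%Z.
set s := ((dot a x + e + al - 1) %/ al)%Z.
have hs1 : dot a x + e <= s * al by rewrite /s; lia.
have hs2 : s * al <= dot a x + e + al - 1 by rewrite /s; lia.
split => //.
have h3 : al * (dot a' x + e') <= al * (s * al') by nia.
by rewrite ler_pM2l in h3.
Qed.

Lemma two_shift x x' : cong `|M|%N x x' -> D x = D x' -> P x -> P x'.
Proof.
move=> hc; rewrite /D => hD [s [h1 h2]].
have hM : `|M|%N%:Z = M by rewrite /M; apply: gtz0_abs; nia.
have := dot_cong a (cong_sym hc); rewrite hM => /dvdzP[q hq].
have := dot_cong a' (cong_sym hc); rewrite hM => /dvdzP[q' hq'].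
have eq1 : al' * q = al * q'.
  have : M * (al' * q - al * q') = 0 by rewrite /M; nia.
  move/eqP; rewrite mulf_eq0 => /orP[/eqP|]; first by rewrite /M; nia.
  by rewrite subr_eq0 => /eqP.
exists (s - q * al'); rewrite /M in hq hq'; split; nia.
Qed.

Lemma good_two : good P.
Proof.
pose a'' := al' *: a - al *: a'; pose ka := al' * e - al * e'.
have hD x : D x = dot a'' x + ka by rewrite /D /a'' dotBl !dotZl /ka; ring.
have hM : (0 < M) by rewrite /M; nia.
have hMn : `|M|%N%:Z = M by apply: gtz0_abs.
exists ([:: [:: (- a'', ka - M + 1)] , [:: (a'', - 1 - ka)] &
          [seq [:: (a'', i%:Z - ka); (- a'', ka - i%:Z)] | i <- iota 0 `|M|%N]]), `|M|%N.
split.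
- by rewrite absz_gt0; apply/eqP; lia.
- move=> x; rewrite /= /sat /= !andbT !dotNl.
  have := hD x; case: (lerP (M - 1) (D x)) => h1 hx.
    by apply/orP; left; lia.
  case: (lerP (D x) (-1)) => h2.
    by apply/orP; right; apply/orP; left; lia.
  apply/orP; right; apply/orP; right; apply/hasP.
  exists [:: (a'', `|D x|%N%:Z - ka); (- a'', ka - `|D x|%N%:Z)].
    apply/mapP; exists `|D x|%N => //; rewrite mem_iota add0n; lia.
  rewrite /sat /= dotNl andbT; have -> : `|D x|%N%:Z = D x by apply: gez0_abs; lia.
  apply/andP; split; lia.
- move=> c; rewrite inE => /orP[/eqP ->|]; rewrite ?inE.
    move=> x x'; rewrite /sat /= !andbT !dotNl => s1 s2 _.
    by split => _; apply: two_big; rewrite hD; lia.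
  move=> /orP[/eqP ->|].
    move=> x x'; rewrite /sat /= !andbT => s1 s2 _.
    by split => hP; exfalso; [apply: (two_neg (x:=x)) | apply: (two_neg (x:=x'))] => //; rewrite hD; lia.
  move=> /mapP[i _ ->] x x'; rewrite /sat /= !andbT !dotNl => /andP[s1 s1'] /andP[s2 s2'] hc.
  have eD : D x = D x' by rewrite !hD; lia.
  split; first exact: two_shift.
  apply: two_shift => //; exact: cong_sym.
Qed.
End Two.
Lemma foldmax (l : seq int) : 0 <= foldr Num.max 0 l /\ (forall v, v \in l -> v <= foldr Num.max 0 l) /\ (foldr Num.max 0 l = 0 \/ foldr Num.max 0 l \in l).
Proof.
elim: l => [|a l [h1 [h2 h3]]] /=; first by split => //; split => //; left.
case: (leP a (foldr Num.max 0 l)) => h.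
  split => //; split.
    move=> v; rewrite inE => /orP[/eqP ->|/h2] //.
  case: h3 => [->|h3]; [left|right]; rewrite ?inE ?h3 ?orbT //.
split; first lia.
split. move=> v; rewrite inE => /orP[/eqP ->|/h2]; lia.
right; by rewrite mem_head.
Qed.

Definition kal (w : vec) (c : vec * int) := dot c.1 w.
Definition kbe (z : vec) (c : vec * int) (x : vec) := dot c.1 x - dot c.1 z - c.2.

Lemma good_key (cs : seq (vec * int)) (z w : vec) :
  good (fun x => exists s : nat, sat cs (x - z - w *+ s)).
Proof.
set al := kal w; set be := kbe z.
have esat c x (s : nat) : (dot c.1 (x - z - w *+ s) <= c.2) = (be c x <= s%:Z * al c).
  rewrite /be /al /kbe /kal !dotB dotMn; move: (dot c.1 x) (dot c.1 z) (dot c.1 w) c.2 => p q r t; apply/idP/idP; nia.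
pose H c x := al c <= 0 -> be c x <= 0.
pose G c c' x := 0 < al c -> al c' < 0 -> exists s : int, be c x <= s * al c /\ be c' x <= s * al c'.
have gH : forall c : vec * int, good (H c).
  move=> c; case: (lerP (al c) 0) => h.
    apply: good_ext (good_half c.1 (c.2 + dot c.1 z)) _ => x; rewrite /H /be /kbe.
    by split => [h1 _|h1]; [|have := h1 h]; lia.
  by apply: good_ext (good_const True) _ => x; rewrite /H; split => // _ h'; lia.
have gG0 : forall c c' : vec * int, good (G c c').
  move=> c c'.
  case h: ((0 < al c) && (al c' < 0)).
    move/andP: h => [h1 h2].
    apply: good_ext (good_two c.1 c'.1 (- dot c.1 z - c.2) (- dot c'.1 z - c'.2) h1 h2) _ => x.
    rewrite /G /be /kbe; split.
      move=> [s [hs1 hs2]] _ _; exists s; split; lia.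
    move=> /(_ h1 h2) [s [hs1 hs2]]; exists s; split; lia.
  apply: good_ext (good_const True) _ => x; rewrite /G; split => // _ h1 h2.
  by move: h; rewrite h1 h2.
have gG : forall c, c \in cs -> good (fun x => forall c', c' \in cs -> G c c' x).
  by move=> c _; apply: good_bigI => c' _; apply: gG0.
apply: good_ext (good_op and (good_bigI (fun c _ => gH c)) (good_bigI gG)) _ => x; split; last first.
  move=> [s /allP hs]; split.
    move=> c hc; have := hs c hc; rewrite esat /H; nia.
  move=> c hc c' hc' _ _; exists s%:Z; split; by rewrite -esat; apply: hs.
move=> [hH hG].
pose lb c := ((be c x + al c - 1) %/ al c)%Z.
have lbP c : 0 < al c -> be c x <= lb c * al c by rewrite /lb; lia.
have lbM c s : 0 < al c -> be c x <= s * al c -> lb c <= s.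
  move=> h1 h2; have : lb c * al c <= be c x + al c - 1 by rewrite /lb; lia.
  nia.
pose L := [seq lb c | c <- cs & 0 < al c].
have [m0 [mge mmem]] := foldmax L.
set s0 := foldr Num.max 0 L in m0 mge mmem.
exists `|s0|%N; apply/allP => c hc; rewrite esat.
have -> : `|s0|%N%:Z = s0 by apply: gez0_abs.
case: (ltrgtP (al c) 0) => hal; last first.
- by rewrite hal mulr0; apply: hH => //; rewrite hal.
- have h1 : lb c <= s0 by apply: mge; apply/mapP; exists c => //; rewrite mem_filter hc hal.
  have := lbP c hal; nia.
case: mmem => [e0|].
  by rewrite e0 mul0r; apply: hH => //; lia.
move=> /mapP[c1]; rewrite mem_filter => /andP[hc1 hc1in] e1.
have [s1 [hs1 hs2]] := hG c1 hc1in c hc hc1 hal.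
have := lbM c1 s1 hc1 hs1; rewrite -e1 => h; nia.
Qed.


Lemma dot_delta (l : 'I_k) x : dot (\row_j ((j == l)%:R : int)) x = x 0 l.
Proof.
rewrite /dot (bigD1 l) //= big1 ?addr0 => [|j /negbTE hj]; rewrite mxE ?eqxx ?mul1r //.
by rewrite hj mul0r.
Qed.

Lemma good_point p : good (fun x => x = p).
Proof.
pose F (l : 'I_k) x := dot (\row_j ((j == l)%:R : int)) x <= p 0 l /\
                       dot (- \row_j ((j == l)%:R : int)) x <= - p 0 l.
have g : good (fun x => forall l, l \in enum 'I_k -> F l x).
  apply: good_bigI => l _; rewrite /F; exact: (good_op and (good_half (\row_j ((j == l)%:R : int)) (p 0 l)) (good_half (- \row_j ((j == l)%:R : int)) (- p 0 l))).
apply: good_ext g _ => x; split.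
  move=> h; apply/rowP => l; have := h l (mem_enum _ l); rewrite /F dotNl !dot_delta.
  move=> [h1 h2]; apply/eqP; rewrite eq_le h1 /=; by rewrite lerN2 in h2.
move=> -> l _; by rewrite /F dotNl !dot_delta lexx.
Qed.

Lemma good_mink S w : good S -> good (fun x => exists t : nat, S (x - w *+ t)).
Proof.
move=> [cells [m [hm hcov hper]]].
pose sig c (r : nat) x := exists y, [/\ sat c y, cong m y (x - w *+ r) & S y].
pose rho c (r : nat) x := exists s : nat, sat c (x - w *+ r - (w *+ m) *+ s).
have g : good (fun x => exists c, c \in cells /\
           exists r, r \in iota 0 m /\ (sig c r x /\ rho c r x)).
  apply: good_bigU => c _; apply: good_bigU => r _; apply: good_op.
    apply: (good_periodic hm) => x x' hx; rewrite /sig.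
    have hx' : cong m (x - w *+ r) (x' - w *+ r) by apply: cong_sub.
    split => -[y [h1 h2 h3]]; exists y; split => //.
      exact: cong_trans h2 hx'.
    exact: cong_trans h2 (cong_sym hx').
  exact: good_key.
apply: good_ext g _ => x; split.
  move=> [c [hc [r [hr [[y [h1 h2 h3]] [s hs]]]]]].
  have e : x - w *+ r - (w *+ m) *+ s = x - w *+ (r + m * s).
    by rewrite mulrnDr -mulrnA opprD addrA.
  rewrite e in hs; exists (r + m * s)%N.
  have hc2 : cong m (x - w *+ (r + m * s)) y.
    exact: cong_trans (cong_shift _ _ _ _ _) (cong_sym h2).
  by apply/(hper c hc _ _ hs h1 hc2).
move=> [t ht].
have /hasP[c hc sc] := hcov (x - w *+ t).
exists c; split => //; exists (t %% m)%N; split.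
  by rewrite mem_iota add0n ltn_pmod.
have et : t = (t %% m + m * (t %/ m))%N by rewrite mulnC addnC -divn_eq.
split.
  exists (x - w *+ t); split => //.
  rewrite {1}et; exact: cong_shift.
exists (t %/ m)%N.
by rewrite -mulrnA -addrA -opprD -mulrnDr -et.
Qed.

Lemma good_lin R (w : 'I_R -> vec) p :
  good (fun x => exists c : 'I_R -> nat, x = p + \sum_(i < R) w i *+ c i).
Proof.
elim: R w => [|R IH] w.
  apply: good_ext (good_point p) _ => x; split.
    by move=> ->; exists (fun _ => 0%N); rewrite big_ord0 addr0.
  by move=> [c ->]; rewrite big_ord0 addr0.
apply: good_ext (good_mink (w ord0) (IH (fun i => w (lift ord0 i)))) _ => x; split.
  move=> [t [c' hc]]; exists (fun i => match unlift ord0 i with Some j => c' j | None => t end).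
  rewrite big_ord_recl unlift_none.
  under eq_bigr => i _ do rewrite liftK.
  by rewrite addrCA -hc addrC subrK.
move=> [c ->]; exists (c ord0), (fun i => c (lift ord0 i)).
by rewrite big_ord_recl addrCA addrC addrK.
Qed.
End Good.


Section Fin.
Variable k : nat.
Notation vec := 'rV[int]_k.

Lemma good_family r (S : 'I_r -> vec -> Prop) : (forall i, good (S i)) ->
  exists cells m, [/\ (0 < m)%N, covers cells & forall i, percell cells m (S i)].
Proof.
elim: r S => [|r IH] S hS.
  exists [:: [::]], 1%N; split => // -[] //.
have [c1 [m1 [hm1 hc1 hp1]]] := IH (fun i => S (lift ord0 i)) (fun i => hS _).
have [c2 [m2 [hm2 hc2 hp2]]] := hS ord0.
exists (prodc c1 c2), (m1 * m2)%N; split; first by rewrite muln_gt0 hm1.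
  exact: covers_prod.
move=> i; case: (unliftP ord0 i) => [j ->|->].
  exact: percell_prodl (hp1 j).
exact: percell_prodr hp2.
Qed.

Definition Amat (C : seq (vec * int)) : 'M[rat]_(size C, k) :=
  \matrix_(i, l) ((nth (0, 0) C i).1 0 l)%:~R.
Definition bcol (C : seq (vec * int)) : 'cV[rat]_(size C) :=
  \col_i ((nth (0, 0) C i).2)%:~R.

Lemma inpoly_sat C n : in_polyhedron (Amat C) (bcol C) n <-> sat C n.
Proof.
have e i : \sum_(l < k) Amat C i l * (n 0 l)%:~R = (dot (nth (0,0) C i).1 n)%:~R.
  rewrite /dot rmorph_sum; apply: eq_bigr => l _; by rewrite mxE rmorphM.
rewrite /in_polyhedron; split.
  move=> h; apply/(all_nthP (0,0)) => i hi; have := h (Ordinal hi).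
  by rewrite e mxE ler_int.
move=> /(all_nthP (0,0)) h i; rewrite e mxE ler_int; exact: h.
Qed.

Lemma cong_fi m : (0 < m)%N -> finite_index (fun x : vec => cong m x 0).
Proof.
case: m => // m _.
exists #|{ffun 'I_k -> 'I_m.+1}|, (fun j => \row_l (((enum_val j : {ffun 'I_k -> 'I_m.+1}) l : nat)%:Z)).
move=> x; pose f := [ffun l : 'I_k => (inord `|(x 0%R l %% m.+1)%Z|%N : 'I_m.+1)].
exists (enum_rank f) => l; rewrite !mxE enum_rankK ffunE inordK; last first.
  have := ltz_pmod (x 0 l) (isT : (0 < m.+1%:Z)); lia.
rewrite subr0; apply/dvdzP; exists (x 0%R l %/ m.+1)%Z.
have := modz_ge0 (x 0 l) (isT : (m.+1%:Z != 0)); move: (x 0%R l) => y; lia.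
Qed.

Lemma pq (F : vec -> nat -> Prop) cells m : (0 < m)%N -> covers cells ->
  (forall v, percell cells m (fun x => F x v)) ->
  (forall n v v', F n v -> F n v' -> v = v') -> piecewise_quasiconstant F.
Proof.
move=> hm hcov hper hfun.
pose C (j : 'I_(size cells)) := nth [::] cells j.
pose val j n := epsilon (inhabits 0%N) (fun v => exists n', [/\ sat (C j) n', cong m n n' & F n' v]).
exists (size cells), (fun j => size (C j)), (fun j => Amat (C j)), (fun j => bcol (C j)),
  (fun _ x => cong m x 0), (fun j n => (val j n)%:Z); split.
- move=> n; have /hasP[c hc sc] := hcov n.
  have hi : (index c cells < size cells)%N by rewrite index_mem.
  exists (Ordinal hi); apply/inpoly_sat; by rewrite /C /= nth_index.
- move=> j; split; last exact: cong_fi.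
  split; first exact: cong_refl.
  move=> x y hx hy l; have := rpredB (hx l) (hy l); by rewrite !mxE !subr0.
- move=> j n n' hn.
  have hc : cong m n n' by move=> l; have := hn l; rewrite !mxE subr0.
  congr (_%:Z); rewrite /val; congr (epsilon _ _).
  apply: functional_extensionality => v; apply: propositional_extensionality.
  split=> -[y [h1 h2 h3]]; exists y; split => //.
    exact: cong_trans (cong_sym hc) h2.
  exact: cong_trans hc h2.
- move=> j n v /inpoly_sat hn hF.
  have ex : exists v, exists n', [/\ sat (C j) n', cong m n n' & F n' v].
    by exists v, n; split => //; exact: cong_refl.
  have [n' [h1 h2 h3]] := epsilon_spec (inhabits 0%N) _ ex.
  congr (_%:Z); apply: (hfun n) hF.
  have hj : C j \in cells by rewrite /C mem_nth.
  by apply/(hper _ _ hj _ _ hn h1 h2).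
Qed.
End Fin.


Lemma fst_sum (U V : zmodType) R (X : 'I_R -> U * V) (c : 'I_R -> nat) :
  (\sum_(l < R) X l *+ c l).1 = \sum_(l < R) (X l).1 *+ c l.
Proof.
have hn (x : U * V) n : (x *+ n).1 = x.1 *+ n by elim: n => // n IH; rewrite !mulrS /= IH.
rewrite (big_morph fst (id1 := 0) (op1 := +%R)) //; apply: eq_bigr => l _; exact: hn.
Qed.

Lemma dim_eq (K : fieldType) a b (phi : 'M[K]_(a, b)) (psi : 'M[K]_(b, a)) :
  phi *m psi = 1%:M -> psi *m phi = 1%:M -> a = b.
Proof.
move=> h1 h2; have r1 := mulmx_max_rank phi psi; have r2 := mulmx_max_rank psi phi.
rewrite h1 mxrank1 in r1; rewrite h2 mxrank1 in r2; apply/eqP; by rewrite eqn_leq r1 r2.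
Qed.

Lemma good_nz (K : fieldType) (k d : nat) (Qplus : 'rV[int]_d -> Prop)
  (dim : 'rV[int]_k -> 'rV[int]_d -> nat) (act : forall n q q', 'M[K]_(dim n q, dim n q')) :
  constructible_family Qplus act -> good (fun n => exists q, dim n q <> 0%N).
Proof.
move=> [P [_ _ [actG [[_ [s [reg [e [phi [psi [T [hss hinv _]]]]]]]] _]]]].
have hd g : dim g.1 g.2 = e (reg g).
  by have [h1 h2] := hinv g; symmetry; exact: dim_eq h1 h2.
have g : good (fun n => exists rho, rho \in enum 'I_s /\
                ((e rho != 0%N) /\ exists q, reg (n, q) = rho)).
  apply: good_bigU => rho _; case: (boolP (e rho != 0%N)) => hr; last first.
    by apply: good_ext (@good_const k False) _ => x; split => // -[].
  have [sr [qr [rr [v [_ hiff _]]]]] := hss rho.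
  have g1 : good (fun n => exists j, j \in enum 'I_sr /\
     exists c : 'I_(rr j) -> nat, n = (qr j).1 + \sum_(l < rr j) (v j l).1 *+ c l).
    by apply: good_bigU => j _; apply: good_lin.
  apply: good_ext g1 _ => n; split.
    move=> [j [_ [c hn]]]; split => //.
    pose y := \sum_(l < rr j) v j l *+ c l.
    exists (qr j + y).2; apply/hiff; exists j, y; split; first by exists c.
    have -> : qr j + y = ((qr j + y).1, (qr j + y).2) by case: (qr j + y).
    by rewrite /= hn fst_sum.
  move=> [_ [q /hiff [j [y [[c hy] hxy]]]]]; exists j; split; first by rewrite mem_enum.
  exists c; have := congr1 fst hxy; rewrite /= => ->; by rewrite hy fst_sum.
apply: good_ext g _ => n; split.
  move=> [rho [_ [/eqP hr [q hq]]]]; exists q; by rewrite (hd (n, q)) /= hq.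
move=> [q hq]; exists (reg (n, q)); split; first by rewrite mem_enum.
by split; [apply/eqP; rewrite -(hd (n, q)) | exists q].
Qed.

End Helpers.
Import Helpers.

Theorem lemma9p2
  (K : fieldType) (k d : nat)
  (t : nat) (gens : 'I_t -> 'rV[int]_d)
  (Hunits : forall x, gen_monoid gens x -> gen_monoid gens (- x) -> x = 0)
  (Hgen : forall x, monoid_group (gen_monoid gens) x)
  (r : nat) (dim : 'I_r -> 'rV[int]_k -> 'rV[int]_d -> nat)
  (act : forall i n q q', 'M[K]_(dim i n q, dim i n q'))
  (Hmod : forall i n, is_gmodule (gen_monoid gens) (act i n))
  (Hcons : forall i, constructible_family (gen_monoid gens) (act i)) :
  let nz := fun (i : 'I_r) (n : 'rV[int]_k) => exists q, dim i n q <> 0%N in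
  piecewise_quasiconstant (max_nonzero nz) /\
  piecewise_quasiconstant (min_nonzero nz).
Proof.
move=> nz.
have gnz : forall i, good (nz i) by move=> i; exact: good_nz (Hcons i).
have [cells [m [hm hcov hper]]] := good_family gnz.
have hP c : c \in cells -> forall x x', sat c x -> sat c x' -> cong m x x' ->
   forall i, nz i x <-> nz i x'.
  by move=> hc x x' s1 s2 hx i; exact: hper i c hc x x' s1 s2 hx.
split; apply: (pq hm hcov).
- move=> v c hc x x' s1 s2 hx; have E := hP c hc x x' s1 s2 hx.
  rewrite /max_nonzero; split => -[[i [h1 h2]] h3]; split.
  + by exists i; split => //; apply/E.
  + by move=> j /E; apply: h3.
  + by exists i; split => //; apply/E.
  + by move=> j /E; apply: h3.
- move=> n v v' [[i [h1 ->]] h2] [[i' [h1' ->]] h2'].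
  have := h2 _ h1'; have := h2' _ h1; lia.
- move=> v c hc x x' s1 s2 hx; have E := hP c hc x x' s1 s2 hx.
  rewrite /min_nonzero; split => -[[i [h1 h2]] h3]; split.
  + by exists i; split => //; apply/E.
  + by move=> j /E; apply: h3.
  + by exists i; split => //; apply/E.
  + by move=> j /E; apply: h3.
- move=> n v v' [[i [h1 ->]] h2] [[i' [h1' ->]] h2'].
  have := h2 _ h1'; have := h2' _ h1; lia.
Qed.
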